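(* For all $a,b\ge2$: $D_2(a,b)=\binom{a}{2}\binom{b}{2}$; $D_3(2,b)=2\binom{b}{3}$; and $D_4(2,b)=3\binom{b}{3}+9\binom{b}{4}$.
   Context: A grid-labelled graph of type $(a,b)$ is a simple graph whose vertex set is the grid $[a]\times[b]$. An edge $\{(i,j),(k,l)\}$ is diagonal if $i\neq k$ and $j\neq l$. The partial transpose $\Gamma(G)$ is the grid-labelled graph with edge set $\{\{(k,j),(i,l)\}:\{(i,j),(k,l)\}\in E(G)\}$; $G$ satisfies the degree criterion if every vertex has the same degree in $G$ and in $\Gamma(G)$. $D_k(a,b)$ is the number of grid-labelled graphs of type $(a,b)$ with exactly $k$ edges, all diagonal, that satisfy the degree criterion. *)

(* Defs.v *)
From mathcomp Require Import all_boot.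
Set Implicit Arguments. Unset Strict Implicit. Unset Printing Implicit Defensive.

(* Vertices of a grid-labelled graph of type (a,b): the grid [a] x [b],
   encoded as 'I_a * 'I_b (0-based). A graph is its edge set, a set of
   2-element subsets of the vertex set. *)
Definition vert (a b : nat) := ('I_a * 'I_b)%type.

Definition simple_graph a b (E : {set {set vert a b}}) : bool :=
  [forall e in E, #|e| == 2].

Definition diag_edge a b (e : {set vert a b}) : bool :=
  [exists p : vert a b, exists q : vert a b,
     [&& e == [set p; q], p.1 != q.1 & p.2 != q.2]].

(* partial transpose: {(i,j),(k,l)} in E gives edge {(k,j),(i,l)} *)
Definition ptrans a b (E : {set {set vert a b}}) : {set {set vert a b}} :=
  [set [set (x.2.1, x.1.2); (x.1.1, x.2.2)] | x : vert a b * vert a b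
     & [set x.1; x.2] \in E].

Definition deg a b (E : {set {set vert a b}}) (v : vert a b) : nat :=
  #|[set e in E | v \in e]|.

Definition degree_criterion a b (E : {set {set vert a b}}) : bool :=
  [forall v : vert a b, deg E v == deg (ptrans E) v].

Definition D (k a b : nat) : nat :=
  #|[set E : {set {set vert a b}} |
      [&& simple_graph E, #|E| == k, [forall e in E, diag_edge e]
        & degree_criterion E]]|.

(* Main.v *)
Require Import Defs.
From mathcomp Require Import all_boot.
From mathcomp Require Import zify.
Set Implicit Arguments. Unset Strict Implicit. Unset Printing Implicit Defensive.

Lemma set2_eq (T : finType) (p q x y : T) : x != y -> [set p; q] = [set x; y] ->
  (p = x /\ q = y) \/ (p = y /\ q = x).
Proof.
move=> nxy E.
have Hp : p \in [set x; y] by rewrite -E set21.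
have Hq : q \in [set x; y] by rewrite -E set22.
have Hx : x \in [set p; q] by rewrite E set21.
have Hy : y \in [set p; q] by rewrite E set22.
rewrite !inE in Hp Hq Hx Hy.
case/orP: Hp => /eqP Hp; subst p.
- left; split => //; case/orP: Hy => /eqP Hy; first by rewrite Hy eqxx in nxy.
  by [].
- right; split => //; case/orP: Hx => /eqP Hx; first by rewrite Hx eqxx in nxy.
  by [].
Qed.

Lemma set2_sym (T : finType) (p q : T) : [set p; q] = [set q; p].
Proof. by rewrite setUC. Qed.

Section PartA.
Variables a b : nat.
Notation V := (vert a b).

Definition gtr (x : V * V) : {set V} := [set (x.2.1, x.1.2); (x.1.1, x.2.2)].

Lemma ptransP (E : {set {set V}}) ed :
  reflect (exists p q, [set p; q] \in E /\ ed = gtr (p, q)) (ed \in ptrans E).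
Proof.
apply: (iffP idP).
- by case/imsetP => [[p q]]; rewrite inE /= => H ->; exists p, q.
- move=> [p [q [H ->]]]; apply/imsetP; exists (p, q) => //; by rewrite inE.
Qed.

Lemma gt_sym p q : gtr (p, q) = gtr (q, p).
Proof. by rewrite /gtr /= setUC. Qed.

Lemma gt_set p q p' q' : p' != q' -> [set p; q] = [set p'; q'] -> gtr (p, q) = gtr (p', q').
Proof. by move=> n /(set2_eq n) [[-> ->]|[-> ->]] //; rewrite gt_sym. Qed.

Definition H2 (x : ('I_a * 'I_a) * ('I_b * 'I_b)) : {set {set V}} :=
  [set [set (x.1.1, x.2.1); (x.1.2, x.2.2)]; [set (x.1.1, x.2.2); (x.1.2, x.2.1)]].

Definition valid2 (E : {set {set V}}) :=
  [&& simple_graph E, #|E| == 2, [forall e in E, diag_edge e] & degree_criterion E].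

Lemma pair_neq (i k : 'I_a) (j l : 'I_b) : i != k -> ((i, j) : V) != (k, l).
Proof. by move=> n; apply/eqP => [[/eqP]]; rewrite (negbTE n). Qed.
Lemma pair_neq2 (i k : 'I_a) (j l : 'I_b) : j != l -> ((i, j) : V) != (k, l).
Proof. by move=> n; apply/eqP => [[_ /eqP]]; rewrite (negbTE n). Qed.

Lemma ptrans_H2 i k j l : i != k -> j != l ->
  ptrans (H2 ((i, k), (j, l))) = H2 ((i, k), (j, l)).
Proof.
move=> nik njl; apply/setP => ed; apply/ptransP/idP.
- move=> [p [q [H ->]]]; rewrite /H2 /= !inE in H *.
  case/orP: H => /eqP H.
  + rewrite (gt_set (pair_neq j l nik) H) /gtr /=.
    by rewrite [X in _ || (X == _)]setUC eqxx orbT.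
  + rewrite (gt_set (pair_neq l j nik) H) /gtr /=.
    by rewrite setUC eqxx.
- rewrite /H2 !inE => /orP [] /eqP ->.
  + exists (i, l), (k, j); split; last by rewrite /gtr /= setUC.
    by rewrite !inE eqxx orbT.
  + exists (i, j), (k, l); split; last by rewrite /gtr /= setUC.
    by rewrite !inE eqxx.
Qed.


Lemma H2_valid i k j l : i != k -> j != l -> valid2 (H2 ((i, k), (j, l))).
Proof.
move=> nik njl; have n1 := pair_neq j l nik; have n2 := pair_neq l j nik.
apply/and4P; split.
- apply/forallP => e; apply/implyP; rewrite /H2 !inE => /orP [] /eqP ->;
  by rewrite cards2 ?n1 ?n2.
- rewrite cards2 /=; suff -> : ([set (i, j); (k, l)] != [set (i, l); (k, j)]) by [].
  apply/eqP => /setP /(_ (i, j)).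
  rewrite !inE eqxx /= => /esym /orP [] /eqP [] => *; subst;
  by rewrite eqxx in nik njl.
- apply/forallP => e; apply/implyP; rewrite /H2 !inE => /orP [] /eqP ->.
  + by apply/existsP; exists (i, j); apply/existsP; exists (k, l); rewrite eqxx nik njl.
  + by apply/existsP; exists (i, l); apply/existsP; exists (k, j); rewrite eqxx nik eq_sym njl.
- by apply/forallP => v; rewrite ptrans_H2.
Qed.

Lemma H2_swap1 i k j l : H2 ((k, i), (j, l)) = H2 ((i, k), (j, l)).
Proof.
by rewrite /H2 /= [[set (k, j); _]]setUC [[set (k, l); _]]setUC setUC.
Qed.
Lemma H2_swap2 i k j l : H2 ((i, k), (l, j)) = H2 ((i, k), (j, l)).
Proof. by rewrite /H2 /= setUC. Qed.

Lemma H2_order (i k : 'I_a) (j l : 'I_b) : i != k -> j != l ->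
  exists (i' k' : 'I_a) (j' l' : 'I_b), [/\ i' < k', j' < l' & H2 ((i, k), (j, l)) = H2 ((i', k'), (j', l'))].
Proof.
move=> nik njl.
have [i' [k' [Hik Eik]]] : exists i' k' : 'I_a, i' < k' /\ H2 ((i, k), (j, l)) = H2 ((i', k'), (j, l)).
  case: (ltngtP i k) => [h|h|h]; first by exists i, k.
  - by exists k, i; rewrite H2_swap1.
  - by move: nik; rewrite (val_inj h) eqxx.
case: (ltngtP j l) => [h|h|h]; first by exists i', k', j, l.
- by exists i', k', l, j; rewrite Eik H2_swap2.
- by move: njl; rewrite (val_inj h) eqxx.
Qed.

Lemma deg_pos (E : {set {set V}}) e v : e \in E -> v \in e -> 0 < deg E v.
Proof. by move=> He Hv; apply/card_gt0P; exists e; rewrite inE He Hv. Qed.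

Lemma deg_posP (E : {set {set V}}) v : 0 < deg E v -> exists2 e, e \in E & v \in e.
Proof. by case/card_gt0P => e; rewrite inE => /andP [] ? ?; exists e. Qed.

Lemma valid2_H2 E : valid2 E -> exists (i k : 'I_a) (j l : 'I_b), [/\ i < k, j < l & E = H2 ((i, k), (j, l))].
Proof.
case/and4P => Hs /eqP Hc Hd Hcr.
have [e1 He1] : exists e1, e1 \in E by apply/card_gt0P; rewrite Hc.
have := forallP Hd e1; rewrite He1 /= => /existsP [[i j]] /existsP [[k l]].
case/and3P => /eqP De1 /= nik njl.
have npq : ((i, j) : V) != (k, l) by apply: pair_neq.
have key : forall v, v \in e1 -> exists x y, [/\ [set x; y] \in E, [set x; y] != e1 & v \in gtr (x, y)].
  move=> v Hv; have := deg_pos He1 Hv; rewrite (eqP (forallP Hcr v)).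
  case/deg_posP => ed /ptransP [x [y [Hxy ->]]] Hv'.
  exists x, y; split => //; apply/eqP => Exy.
  move: Hv'; rewrite De1 in Exy; rewrite (gt_set npq Exy) /gtr /= !inE.
  move: Hv; rewrite De1 !inE => /orP [] /eqP -> /orP [] /eqP [];
   by move=> *; subst; rewrite eqxx in nik njl.
have [x [y [Hxy n1 Hpx]]] := key (i, j) ltac:(by rewrite De1 set21).
have [x' [y' [Hxy' n1' Hqx]]] := key (k, l) ltac:(by rewrite De1 set22).
have nxy : x != y.
  by have := forallP Hs [set x; y]; rewrite Hxy /= cards2; case: (x != y).
have DE : E = [set e1; [set x; y]].
  apply/eqP; rewrite eq_sym eqEcard Hc cards2 eq_sym n1 andbT.
  by apply/subsetP => z; rewrite !inE => /orP [] /eqP ->.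
have Exy' : [set x'; y'] = [set x; y].
  by move: Hxy'; rewrite DE !inE (negbTE n1') => /eqP.
rewrite (gt_set nxy Exy') in Hqx.
have Dg : gtr (x, y) = [set (i, j); (k, l)].
  apply/eqP; rewrite eq_sym eqEcard; apply/andP; split.
    by apply/subsetP => z /set2P [] ->.
  by rewrite (cards2 (i, j)) npq /gtr cards2; case: (_ != _).
suff DH : E = H2 ((i, k), (j, l)) by rewrite DH; apply: H2_order.
rewrite DE De1 /H2 /=; congr [set _; _].
move: Dg; rewrite /gtr /= => /(set2_eq npq) [[[Ey1 Ex2] [Ex1 Ey2]]|[[Ey1 Ex2] [Ex1 Ey2]]].
- by rewrite [x]surjective_pairing [y]surjective_pairing Ex1 Ex2 Ey1 Ey2 setUC.
- by rewrite [x]surjective_pairing [y]surjective_pairing Ex1 Ex2 Ey1 Ey2.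
Qed.
End PartA.

Lemma card_lt_pairs n : #|[set x : 'I_n * 'I_n | x.1 < x.2]| = 'C(n, 2).
Proof.
rewrite -[in RHS](card_ord n) -card_draws.
have -> : [set A : {set 'I_n} | #|A| == 2] =
          (fun x : 'I_n * 'I_n => [set x.1; x.2]) @: [set x : 'I_n * 'I_n | x.1 < x.2].
  apply/setP => A; rewrite inE; apply/idP/imsetP.
  - case/cards2P => x [y [nxy ->]].
    case: (ltngtP x y) => [h|h|h]; first by exists (x, y); rewrite ?inE.
    + by exists (y, x); rewrite ?inE //= setUC.
    + by move: nxy; rewrite (val_inj h) eqxx.
  - case=> [[x y]]; rewrite inE /= => h ->.
    have nxy : x != y by apply/eqP => e; rewrite e ltnn in h.
    by rewrite cards2 nxy.
apply/esym/card_in_imset => [[x1 x2] [y1 y2]]; rewrite !inE /= => h1 h2 E.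
have nxy : y1 != y2 by apply/eqP => e; rewrite e ltnn in h2.
case: (set2_eq nxy E) => [[-> ->]|[e1 e2]] //.
by move: h1; rewrite e1 e2 => /(ltn_trans h2); rewrite ltnn.
Qed.

Lemma D2_eq a b : D 2 a b = 'C(a, 2) * 'C(b, 2).
Proof.
rewrite /D -(card_lt_pairs a) -(card_lt_pairs b) -cardsX.
have -> : [set E : {set {set vert a b}} | [&& simple_graph E, #|E| == 2,
      [forall e in E, diag_edge e] & degree_criterion E]] =
    (@H2 a b) @: setX [set x : 'I_a * 'I_a | x.1 < x.2] [set x : 'I_b * 'I_b | x.1 < x.2].
  apply/setP => E; rewrite inE; apply/idP/imsetP.
  - case/valid2_H2 => i [k [j [l [h1 h2 ->]]]].
    by exists ((i, k), (j, l)); rewrite // !inE h1 h2.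
  - case=> [[[i k] [j l]]]; rewrite !inE /= => /andP [h1 h2] ->.
    apply: H2_valid; apply/eqP => e; [move: h1|move: h2]; by rewrite e ltnn.
apply: card_in_imset => [[[i k] [j l]]] [[i' k'] [j' l']].
rewrite !inE /= => /andP [h1 h2] /andP [h1' h2'] E.
have ni : ((i', j') : vert a b) != (k', l').
  by apply: pair_neq; apply/eqP => e; rewrite e ltnn in h1'.
have ni2 : ((i', l') : vert a b) != (k', j').
  by apply: pair_neq; apply/eqP => e; rewrite e ltnn in h1'.
have : [set (i, j); (k, l)] \in H2 ((i', k'), (j', l')) by rewrite -E !inE eqxx.
rewrite !inE => /orP [] /eqP.
- case/(set2_eq ni) => [[[-> ->] [-> ->]]|[[e1 e2] [e3 e4]]] //.
  by move: h1; rewrite e1 e3 => /(ltn_trans h1'); rewrite ltnn.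
- case/(set2_eq ni2) => [[[e1 e2] [e3 e4]]|[[e1 e2] [e3 e4]]].
  + by move: h2; rewrite e2 e4 => /(ltn_trans h2'); rewrite ltnn.
  + by move: h1; rewrite e1 e3 => /(ltn_trans h1'); rewrite ltnn.
Qed.


Definition out n (R : {set 'I_n * 'I_n}) (x : 'I_n) := #|[set p in R | p.1 == x]|.
Definition inn n (R : {set 'I_n * 'I_n}) (x : 'I_n) := #|[set p in R | p.2 == x]|.
Definition validR (k n : nat) (R : {set 'I_n * 'I_n}) :=
  [forall x, (x, x) \notin R] && (#|R| == k) && [forall x, out R x == inn R x].

Definition swp n (x : 'I_n * 'I_n) := (x.2, x.1).
Arguments swp {n}.
Lemma swp_inj n : injective (@swp n).
Proof. by move=> [x1 x2] [y1 y2] [-> ->]. Qed.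

Lemma out_swp n (R : {set 'I_n * 'I_n}) y : out (swp @: R) y = inn R y.
Proof.
rewrite /out /inn -[in RHS](card_imset _ (@swp_inj n)); apply: eq_card => p.
rewrite !inE; apply/andP/imsetP.
- case=> /imsetP [q Hq ->] /= e; exists q => //; by rewrite inE Hq e.
- case=> q; rewrite inE => /andP [Hq e] ->; split => //; exact: imset_f.
Qed.

Lemma inn_swp n (R : {set 'I_n * 'I_n}) y : inn (swp @: R) y = out R y.
Proof.
rewrite /out /inn -[in RHS](card_imset _ (@swp_inj n)); apply: eq_card => p.
rewrite !inE; apply/andP/imsetP.
- case=> /imsetP [q Hq ->] /= e; exists q => //; by rewrite inE Hq e.
- case=> q; rewrite inE => /andP [Hq e] ->; split => //; exact: imset_f.
Qed.

Section Trans.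
Variable b : nat.
Notation V := (vert 2 b).
Definition o0 : 'I_2 := @Ordinal 2 0 isT.
Definition o1 : 'I_2 := @Ordinal 2 1 isT.
Lemma ord2 (i : 'I_2) : i = o0 \/ i = o1.
Proof. case: i => [[|[|m]] h] //; [left|right]; exact: val_inj. Qed.

Definition ee (x : 'I_b * 'I_b) : {set V} := [set (o0, x.1); (o1, x.2)].

Lemma o01 (y z : 'I_b) : ((o0, y) : V) == (o1, z) = false.
Proof. by []. Qed.
Lemma o10 (y z : 'I_b) : ((o1, y) : V) == (o0, z) = false.
Proof. by []. Qed.

Lemma mem_ee0 x y : ((o0, y) \in ee x) = (x.1 == y).
Proof. by rewrite !inE o01 orbF eq_sym; apply/eqP/eqP => [[]|->]. Qed.
Lemma mem_ee1 x y : ((o1, y) \in ee x) = (x.2 == y).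
Proof. by rewrite !inE o10 /= eq_sym; apply/eqP/eqP => [[]|->]. Qed.

Lemma ee_inj : injective ee.
Proof.
move=> [x1 x2] [y1 y2] /setP E.
have h1 : (o0, x1) \in ee (y1, y2) by rewrite -E set21.
have h2 : (o1, x2) \in ee (y1, y2) by rewrite -E set22.
by rewrite mem_ee0 /= in h1; rewrite mem_ee1 /= in h2; rewrite (eqP h1) (eqP h2).
Qed.

Lemma deg_ee0 (R : {set 'I_b * 'I_b}) y : deg (ee @: R) (o0, y) = out R y.
Proof.
rewrite /deg /out -[in RHS](card_imset _ ee_inj); apply: eq_card => e.
rewrite !inE; apply/andP/imsetP.
- case=> /imsetP [q Hq ->]; rewrite mem_ee0 => h; exists q => //; by rewrite inE Hq h.
- case=> q; rewrite inE => /andP [Hq h] ->; rewrite mem_ee0 h; split => //; exact: imset_f.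
Qed.
Lemma deg_ee1 (R : {set 'I_b * 'I_b}) y : deg (ee @: R) (o1, y) = inn R y.
Proof.
rewrite /deg /inn -[in RHS](card_imset _ ee_inj); apply: eq_card => e.
rewrite !inE; apply/andP/imsetP.
- case=> /imsetP [q Hq ->]; rewrite mem_ee1 => h; exists q => //; by rewrite inE Hq h.
- case=> q; rewrite inE => /andP [Hq h] ->; rewrite mem_ee1 h; split => //; exact: imset_f.
Qed.

Lemma ptrans_ee (R : {set 'I_b * 'I_b}) : ptrans (ee @: R) = ee @: (swp @: R).
Proof.
apply/setP => ed; apply/ptransP/imsetP.
- move=> [p [q [/imsetP [x Hx Ex] ->]]].
  have nx : ((o0, x.1) : V) != (o1, x.2) by rewrite o01.
  exists (swp x); first exact: imset_f.
  case: (set2_eq nx Ex) => [[-> ->]|[-> ->]]; rewrite /gtr /ee /=; first by rewrite setUC.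
  by [].
- move=> [y /imsetP [x Hx ->] ->]; exists (o0, x.1), (o1, x.2); split.
  + exact: (imset_f ee Hx).
  + by rewrite /gtr /ee /= setUC.
Qed.

Lemma transl k : D k 2 b = #|[set R : {set 'I_b * 'I_b} | validR k R]|.
Proof.
rewrite /D -[in RHS](card_imset _ (imset_inj ee_inj)); apply: eq_card => E.
rewrite inE; apply/idP/imsetP.
- case/and4P => Hs /eqP Hc Hd Hcr.
  have DE : E = ee @: [set x | ee x \in E].
    apply/setP => e; apply/idP/imsetP; last by case=> x; rewrite inE => h ->.
    move=> He; have := forallP Hd e; rewrite He /= => /existsP [p] /existsP [q].
    case/and3P => /eqP De n1 _; subst e.
    case: (ord2 p.1) => e1; case: (ord2 q.1) => e2; rewrite e1 e2 in n1 => //.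
    + exists (p.2, q.2); last by rewrite /ee [p]surjective_pairing [q]surjective_pairing e1 e2.
      by rewrite inE /ee -e1 -e2 -!surjective_pairing.
    + exists (q.2, p.2); last by rewrite /ee [p]surjective_pairing [q]surjective_pairing e1 e2 setUC.
      by rewrite inE /ee -e1 -e2 -!surjective_pairing setUC.
  exists [set x | ee x \in E] => //; rewrite inE.
  rewrite /validR -andbA; apply/and3P; split.
  + apply/forallP => x; rewrite inE; apply/negP => Hx.
    have := forallP Hd (ee (x, x)); rewrite Hx /= => /existsP [p] /existsP [q].
    case/and3P => /eqP De _ /eqP; apply.
    have : p \in ee (x, x) by rewrite De set21.
    have : q \in ee (x, x) by rewrite De set22.
    by rewrite !inE => /orP [] /eqP -> /orP [] /eqP ->.
  + by rewrite -(card_imset _ ee_inj) -DE Hc.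
  + apply/forallP => y; have := forallP Hcr (o0, y).
    move: DE; set R := [set x | ee x \in E] => DE.
    by rewrite DE deg_ee0 ptrans_ee deg_ee0 out_swp.
- case=> R; rewrite inE /validR -andbA => /and3P [Hi /eqP Hc Hb] ->.
  apply/and4P; split.
  + by apply/forallP => e; apply/implyP => /imsetP [x _ ->]; rewrite cards2 o01.
  + by rewrite (card_imset _ ee_inj) Hc.
  + apply/forallP => e; apply/implyP => /imsetP [x Hx ->].
    apply/existsP; exists (o0, x.1); apply/existsP; exists (o1, x.2); rewrite eqxx /=.
    apply/eqP => ex; have := forallP Hi x.1; rewrite {2}ex -surjective_pairing Hx //.
  + apply/forallP => [[i y]]; rewrite ptrans_ee.
    case: (ord2 i) => ->; rewrite ?deg_ee0 ?deg_ee1 ?out_swp ?inn_swp.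
    * exact: forallP Hb y.
    * by rewrite eq_sym; exact: forallP Hb y.
Qed.
End Trans.


Definition F k n (A : {set 'I_n}) :=
  #|[set R : {set 'I_n * 'I_n} | validR k R && [forall x in A, 0 < out R x]]|.

Section Lift.
Variables (n : nat) (v : 'I_n.+1).
Definition liftp (x : 'I_n * 'I_n) := (lift v x.1, lift v x.2).
Lemma liftp_inj : injective liftp.
Proof. move=> [x1 x2] [y1 y2] E; have e1 := f_equal fst E; have e2 := f_equal snd E; rewrite /= in e1 e2. by rewrite (lift_inj e1) (lift_inj e2). Qed.

Definition LR (R : {set 'I_n * 'I_n}) := liftp @: R.

Lemma out_LR R y : out (LR R) (lift v y) = out R y.
Proof.
rewrite /out -[in RHS](card_imset _ liftp_inj); apply: eq_card => p.
rewrite !inE; apply/andP/imsetP.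
- case=> /imsetP [q Hq ->] /=; rewrite (inj_eq (@lift_inj _ v)) => h.
  by exists q => //; rewrite inE Hq h.
- case=> q; rewrite inE => /andP [Hq h] ->; split; first exact: imset_f.
  by rewrite /= (inj_eq (@lift_inj _ v)).
Qed.
Lemma inn_LR R y : inn (LR R) (lift v y) = inn R y.
Proof.
rewrite /inn -[in RHS](card_imset _ liftp_inj); apply: eq_card => p.
rewrite !inE; apply/andP/imsetP.
- case=> /imsetP [q Hq ->] /=; rewrite (inj_eq (@lift_inj _ v)) => h.
  by exists q => //; rewrite inE Hq h.
- case=> q; rewrite inE => /andP [Hq h] ->; split; first exact: imset_f.
  by rewrite /= (inj_eq (@lift_inj _ v)).
Qed.
Lemma out_LR_v R : out (LR R) v = 0.
Proof.
apply/eqP; rewrite cards_eq0; apply/eqP/setP => p; rewrite !inE.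
apply/negP => /andP [/imsetP [q _ ->]] /=; by rewrite eq_sym (negbTE (neq_lift _ _)).
Qed.
Lemma inn_LR_v R : inn (LR R) v = 0.
Proof.
apply/eqP; rewrite cards_eq0; apply/eqP/setP => p; rewrite !inE.
apply/negP => /andP [/imsetP [q _ ->]] /=; by rewrite eq_sym (negbTE (neq_lift _ _)).
Qed.

Lemma validR_LR k R : validR k (LR R) = validR k R.
Proof.
rewrite /validR /LR (card_imset _ liftp_inj); congr (_ && _ && _).
- apply/forallP/forallP => h x.
  + by have := h (lift v x); rewrite -[(lift v x, lift v x)]/(liftp (x, x)) (mem_imset _ _ liftp_inj).
  + case: (unliftP v x) => [y ->|->]; first by rewrite -[(lift v y, lift v y)]/(liftp (y, y)) (mem_imset _ _ liftp_inj); apply: h.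
    by apply/negP => /imsetP [q _ [e _]]; move: (neq_lift v q.1); rewrite -e eqxx.
- apply/forallP/forallP => h x.
  + by have := h (lift v x); rewrite out_LR inn_LR.
  + case: (unliftP v x) => [y ->|->]; first by rewrite out_LR inn_LR.
    by rewrite out_LR_v inn_LR_v.
Qed.

Lemma remove k (B : {set 'I_n.+1}) : v \notin B ->
  #|[set R' : {set 'I_n.+1 * 'I_n.+1} | validR k R' && [forall x in B, 0 < out R' x]
       && ~~ (0 < out R' v)]| = F k (lift v @^-1: B).
Proof.
move=> vB; rewrite /F -[in RHS](card_imset _ (imset_inj liftp_inj)).
apply: eq_card => R'; rewrite inE; apply/idP/imsetP.
- case/andP => /andP [Hv HB]; rewrite lt0n negbK => /eqP Hout.
  have Hin : inn R' v = 0.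
    by move: Hv => /andP [_ /forallP /(_ v) /eqP]; rewrite Hout => <-.
  set R := [set q | liftp q \in R'].
  have DR : R' = LR R.
    apply/setP => p; apply/idP/imsetP; last by case=> q; rewrite inE => h ->.
    move=> Hp.
    have n1 : v != p.1.
      apply/eqP => e; rewrite {}e in Hout; move: Hout => /eqP; rewrite cards_eq0 => /eqP /setP /(_ p).
      by rewrite !inE Hp eqxx.
    have n2 : v != p.2.
      apply/eqP => e; rewrite {}e in Hin; move: Hin => /eqP; rewrite cards_eq0 => /eqP /setP /(_ p).
      by rewrite !inE Hp eqxx.
    have [y1 e1 _] := unlift_some n1.
    have [y2 e2 _] := unlift_some n2.
    exists (y1, y2); last by rewrite [p]surjective_pairing e1 e2.
    by rewrite inE /liftp /= -e1 -e2 -surjective_pairing.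
  exists R => //; rewrite inE -(validR_LR k) -DR Hv /=.
  apply/forallP => y; apply/implyP; rewrite inE => hy.
  by have := forallP HB (lift v y); rewrite hy /= DR out_LR.
- case=> R; rewrite inE => /andP [Hv HA] ->.
  rewrite validR_LR Hv out_LR_v /= andbT.
  apply/forallP => x; apply/implyP => hx.
  case: (unliftP v x) hx => [y ->|->]; last by rewrite (negbTE vB).
  by move=> hy; rewrite out_LR; have := forallP HA y; rewrite inE hy.
Qed.
End Lift.

Definition cc k s := F k [set: 'I_s].

Lemma F_split k n (B : {set 'I_n.+1}) v : v \notin B ->
  F k B = F k (v |: B) + F k (lift v @^-1: B).
Proof.
move=> vB; rewrite -remove // /F.
rewrite -(cardsID [set R : {set 'I_n.+1 * 'I_n.+1} | 0 < out R v]); congr (_ + _).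
- apply: eq_card => R; rewrite !inE -andbA; congr (_ && _).
  apply/idP/idP.
  + case/andP => h2 h1; apply/forallP => x; apply/implyP; rewrite !inE => /orP [/eqP ->|hx] //.
    by move/forall_inP: h2; apply.
  + move/forallP => h; apply/andP; split; last by have := h v; rewrite setU11.
    by apply/forallP => x; apply/implyP => hx; have := h x; rewrite inE hx orbT.
- by apply: eq_card => R; rewrite !inE andbC.
Qed.

Lemma c_big k s : k < s -> cc k s = 0.
Proof.
move=> ks; apply/eqP; rewrite cards_eq0; apply/eqP/setP => R; rewrite !inE.
apply/negP => /andP [/andP [/andP [_ /eqP Hc] _] /forallP Hf].
have : [set: 'I_s] \subset (fun p : 'I_s * 'I_s => p.1) @: R.
  apply/subsetP => x _; have := Hf x; rewrite inE /out => /card_gt0P [p].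
  by rewrite inE => /andP [hp /eqP <-]; apply: imset_f.
move/subset_leq_card; rewrite cardsT card_ord => h.
have := leq_trans h (leq_imset_card _ _); rewrite Hc => h'.
by move: (leq_trans ks h'); rewrite ltnn.
Qed.

Lemma F_setT k n (A : {set 'I_n}) : #|A| = n -> F k A = cc k n.
Proof.
move=> h; suff -> : A = [set: 'I_n] by [].
by apply/eqP; rewrite eqEcard subsetT cardsT card_ord h leqnn.
Qed.

Lemma sum_shift k m (f : nat -> nat) : f k.+1 = 0 ->
  \sum_(0 <= t < k.+1) 'C(m.+1, t) * f t =
  \sum_(0 <= t < k.+1) 'C(m, t) * f t.+1 + \sum_(0 <= t < k.+1) 'C(m, t) * f t.
Proof.
move=> fk.
rewrite big_nat_recl // [X in _ = _ + X]big_nat_recl // [X in _ = X + _]big_nat_recr //=.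
rewrite fk muln0 addn0 !bin0 !mul1n.
under eq_bigr do rewrite binS mulnDl.
by rewrite big_split /= addnA addnC.
Qed.

Lemma F_formula k m : forall n (A : {set 'I_n}), #|A| + m = n ->
  F k A = \sum_(0 <= t < k.+1) 'C(m, t) * cc k (#|A| + t).
Proof.
elim: m => [|m IH] n A h.
- rewrite addn0 in h. rewrite big_nat_recl // bin0 mul1n addn0.
  rewrite (F_setT k h) h big1 ?addn0 // => t _; by rewrite bin0n.
- case: n A h => [|n] A h; first by rewrite addnS in h.
  have [v vA] : exists v, v \notin A.
    case: (pickP (fun x => x \notin A)) => [v hv|hA]; first by exists v.
    have eA : A = setT by apply/setP => x; have := hA x; rewrite inE /=; case: (x \in A).
    by move: h; rewrite eA cardsT card_ord; lia.
  rewrite (F_split k vA).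
  have c1 : #|v |: A| = #|A| + 1 by rewrite cardsU1 vA addnC.
  have c2 : #|lift v @^-1: A| = #|A|.
    rewrite -[LHS](card_imset _ (@lift_inj _ v)); apply: eq_card => x.
    apply/imsetP/idP => [[y]|hx]; first by rewrite inE => hy ->.
    have nx : v != x by apply/eqP => e; rewrite e hx in vA.
    have [y e _] := unlift_some nx; exists y => //; by rewrite inE -e.
  rewrite (IH _ (v |: A)) ?c1 ?addn1 ?addSn -?addnS //.
  rewrite (IH _ (lift v @^-1: A)) ?c2; last by move: h; lia.
  rewrite sum_shift ?c_big //; last by lia.
  by congr (_ + _); apply: eq_bigr => t _; rewrite addSn addnS.
Qed.

Lemma count_valid k b : #|[set R : {set 'I_b * 'I_b} | validR k R]| =
  \sum_(0 <= t < k.+1) 'C(b, t) * cc k t.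
Proof.
have := @F_formula k b b set0; rewrite cards0 add0n => <- //.
apply: eq_card => R; rewrite !inE; case: (validR k R) => //=. symmetry; apply/forall_inP => x; by rewrite inE.
Qed.


Section Bits.
Variable m : nat.
Notation n := m.+1.
Notation T := ('I_n * 'I_n)%type.

Lemma sum_iota (G : 'I_n -> nat) : \sum_(x < n) G x = sumn [seq G (inord i) | i <- iota 0 n].
Proof.
rewrite sumnE big_map (_ : iota 0 n = index_iota 0 n); last by rewrite /index_iota subn0.
rewrite big_mkord.
by apply: eq_bigr => x _; rewrite inord_val.
Qed.

Lemma card_iota (Q : 'I_n -> bool) : #|[set y | Q y]| = sumn [seq (Q (inord j) : nat) | j <- iota 0 n].
Proof.
rewrite -sum1dep_card big_mkcond sum_iota; congr sumn; apply: eq_map => i.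
Qed.

Lemma forall_iota (Q : 'I_n -> bool) : [forall x, Q x] = all (fun i => Q (inord i)) (iota 0 n).
Proof.
apply/forallP/allP => h.
- by move=> i _; apply: h.
- move=> x; have := h x; rewrite mem_iota /= ltn_ord inord_val; by apply.
Qed.

Definition sigR (R : {set T}) : seq bool :=
  [seq ((inord (i %/ n), inord (i %% n)) : T) \in R | i <- iota 0 (n * n)].
Definition setof (s : seq bool) : {set T} := [set x : T | nth false s (x.1 * n + x.2)].

Lemma size_sig R : size (sigR R) = n * n.
Proof. by rewrite size_map size_iota. Qed.

Lemma idx_lt (x : T) : x.1 * n + x.2 < n * n.
Proof. case: x => [[i hi] [j hj]] /=; nia. Qed.

Lemma nth_sig R (x : T) : nth false (sigR R) (x.1 * n + x.2) = (x \in R).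
Proof.
rewrite (nth_map 0) ?size_iota ?idx_lt // nth_iota ?idx_lt // add0n.
rewrite divnMDl // divn_small // addn0 modnMDl modn_small //.
by rewrite !inord_val -surjective_pairing.
Qed.

Lemma setofK R : setof (sigR R) = R.
Proof. by apply/setP => x; rewrite inE nth_sig. Qed.

Lemma sigK s : size s = n * n -> sigR (setof s) = s.
Proof.
move=> hs; rewrite /sigR -[in RHS](mkseq_nth false s) /mkseq hs.
apply/eq_in_map => i; rewrite mem_iota add0n => /andP [_ hi]; rewrite inE /=.
rewrite !inordK; first by rewrite -divn_eq.
- by rewrite ltn_pmod.
- by rewrite ltn_divLR.
Qed.

Fixpoint allbits (k : nat) : seq (seq bool) :=
  if k is k'.+1 then [seq true :: s | s <- allbits k'] ++ [seq false :: s | s <- allbits k']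
  else [:: [::]].

Lemma mem_allbits k s : (s \in allbits k) = (size s == k).
Proof.
elim: k s => [|k IH] [|c s] //=; rewrite mem_cat.
- by apply/orP => [[]] /mapP [].
- rewrite eqSS -IH; case: c.
  + rewrite mem_map; last by move=> ? ? [].
    by case: (s \in allbits k) => //=; apply/mapP => [[]].
  + rewrite mem_map; last by move=> ? ? [].
    by rewrite orbC; case: (s \in allbits k) => //=; apply/mapP => [[]].
Qed.

Lemma uniq_allbits k : uniq (allbits k).
Proof.
elim: k => [|k IH] //=; rewrite cat_uniq !map_inj_uniq ?IH //=; try by move=> ? ? [].
rewrite andbT; apply/hasPn => x /mapP [y _ ->]; apply/mapP => [[z _]]. by [].
Qed.

Lemma count_bits (P : {set T} -> bool) (Pb : seq bool -> bool) :
  (forall R, P R = Pb (sigR R)) -> #|[set R | P R]| = count Pb (allbits (n * n)).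
Proof.
move=> hP.
have U : uniq [seq setof s | s <- [seq s <- allbits (n * n) | Pb s]].
  rewrite map_inj_in_uniq ?filter_uniq ?uniq_allbits // => s1 s2.
  rewrite !mem_filter !mem_allbits => /andP [_ /eqP h1] /andP [_ /eqP h2] e.
  by rewrite -(sigK h1) -(sigK h2) e.
rewrite -size_filter -(size_map setof) -(card_uniqP U); apply: eq_card => R.
rewrite inE; apply/idP/mapP.
- move=> h; exists (sigR R); last by rewrite setofK.
  by rewrite mem_filter -hP h mem_allbits size_sig /=.
- case=> s; rewrite mem_filter mem_allbits => /andP [hb /eqP hs] ->.
  by rewrite hP sigK.
Qed.


Definition fb (s : seq bool) i j := nth false s (i * n + j).
Definition rowc s i := sumn [seq (fb s i j : nat) | j <- iota 0 n].
Definition colc s i := sumn [seq (fb s j i : nat) | j <- iota 0 n].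
Definition Pb k s :=
  all (fun i => ~~ fb s i i) (iota 0 n) && (sumn [seq rowc s i | i <- iota 0 n] == k)
  && all (fun i => rowc s i == colc s i) (iota 0 n) && all (fun i => 0 < rowc s i) (iota 0 n).

Lemma fb_sig R i j : i < n -> j < n -> fb (sigR R) i j = ((inord i, inord j) \in R).
Proof.
move=> hi hj; rewrite /fb -nth_sig /=; by rewrite !inordK.
Qed.

Lemma out_row (R : {set T}) (x : 'I_n) : out R x = rowc (sigR R) x.
Proof.
rewrite /out /rowc.
have -> : [set p in R | p.1 == x] = (pair x) @: [set y | (x, y) \in R].
  apply/setP => p; rewrite !inE; apply/andP/imsetP.
  - by case=> hp /eqP e; exists p.2; rewrite ?inE -?e -?surjective_pairing.
  - by case=> y; rewrite inE => hy ->.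
rewrite card_imset; last by move=> ? ? [].
rewrite card_iota; congr sumn; apply/eq_in_map => j; rewrite mem_iota => /andP [_ hj].
by rewrite fb_sig // inord_val.
Qed.

Lemma inn_col (R : {set T}) (x : 'I_n) : inn R x = colc (sigR R) x.
Proof.
rewrite /inn /colc.
have -> : [set p in R | p.2 == x] = (fun y => (y, x)) @: [set y | (y, x) \in R].
  apply/setP => p; rewrite !inE; apply/andP/imsetP.
  - by case=> hp /eqP e; exists p.1; rewrite ?inE -?e -?surjective_pairing.
  - by case=> y; rewrite inE => hy ->.
rewrite card_imset; last by move=> ? ? [].
rewrite card_iota; congr sumn; apply/eq_in_map => j; rewrite mem_iota => /andP [_ hj].
by rewrite fb_sig // inord_val.
Qed.

Lemma card_out (R : {set T}) : #|R| = \sum_(x < n) out R x.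
Proof.
rewrite -sum1_card (partition_big (fun p : T => p.1) xpredT) //=.
apply: eq_bigr => x _; rewrite /out -sum1dep_card; apply: eq_bigl => p; by [].
Qed.

Lemma P_Pb k (R : {set T}) : validR k R && [forall x in [set: 'I_n], 0 < out R x] = Pb k (sigR R).
Proof.
rewrite /validR /Pb; congr (_ && _ && _ && _).
- rewrite forall_iota; apply/eq_in_all => i; rewrite mem_iota => /andP [_ hi].
  by rewrite fb_sig.
- rewrite card_out sum_iota; congr (sumn _ == k); apply/eq_in_map => i.
  rewrite mem_iota => /andP [_ hi]; by rewrite out_row inordK.
- rewrite forall_iota; apply/eq_in_all => i; rewrite mem_iota => /andP [_ hi].
  by rewrite out_row inn_col inordK.
- rewrite (_ : [forall x in [set: 'I_n], 0 < out R x] = [forall x, 0 < out R x]); last first.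
    by apply/forall_inP/forallP => h x //; apply: h; rewrite inE.
  rewrite forall_iota; apply/eq_in_all => i; rewrite mem_iota => /andP [_ hi].
  by rewrite out_row inordK.
Qed.

Lemma cc_count k : cc k n = count (Pb k) (allbits (n * n)).
Proof. by rewrite /cc /F; apply: count_bits => R; exact: P_Pb. Qed.

End Bits.

Lemma cc0 k : 0 < k -> cc k 0 = 0.
Proof.
move=> hk; apply/eqP; rewrite cards_eq0; apply/eqP/setP => R; rewrite !inE.
apply/negP => /andP [/andP [/andP [_ /eqP hc] _] _].
have : #|R| <= #|[set: 'I_0 * 'I_0]| by apply: subset_leq_card; apply: subsetT.
rewrite cardsT card_prod card_ord hc => h; by move: hk; case: k hc h.
Qed.

Lemma cc3 : [/\ cc 3 0 = 0, cc 3 1 = 0, cc 3 2 = 0 & cc 3 3 = 2].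
Proof.
split; first exact: cc0.
all: rewrite cc_count; vm_compute; reflexivity.
Qed.

Lemma cc4 : [/\ cc 4 0 = 0, cc 4 1 = 0, cc 4 2 = 0, cc 4 3 = 3 & cc 4 4 = 9].
Proof.
split; first exact: cc0.
all: rewrite cc_count; vm_compute; reflexivity.
Qed.


Theorem mainTheorem17 (a b : nat) (ha : 2 <= a) (hb : 2 <= b) :
  [/\ D 2 a b = 'C(a, 2) * 'C(b, 2),
      D 3 2 b = 2 * 'C(b, 3)
    & D 4 2 b = 3 * 'C(b, 3) + 9 * 'C(b, 4)].
Proof.
split; first exact: D2_eq.
- rewrite transl count_valid; have [h0 h1 h2 h3] := cc3.
  rewrite !big_nat_recl // big_geq // h0 h1 h2 h3.
  by rewrite !muln0 !add0n addn0 mulnC.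
- rewrite transl count_valid; have [h0 h1 h2 h3 h4] := cc4.
  rewrite !big_nat_recl // big_geq // h0 h1 h2 h3 h4.
  by rewrite !muln0 !add0n addn0 (mulnC 3) (mulnC 9).
Qed.
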